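(* In the Classified Reallocation algorithm (with power-of-two laxities), suppose a client $c_i$ is reallocated out of the big channel during the processing of an arrival (because its laxity satisfies $w_i<\tau/2$ after $\tau$ is updated). Let $n$ be the number of active clients at the time of this reallocation and $n'$ the number of active clients at the time of the last allocation of $c_i$ to the big channel. Then $n\ge 2n'$.
   Context: Model: discrete time; each client $c_i$ has arrival time, departure time and laxity $w_i$ (a power of $2$), and must transmit at least once in every $w_i$ consecutive time steps while active; one transmission per channel per time step. A reallocation is a change of the channel of a client. For $x>0$, $\lceil\lceil x\rceil\rceil$ denotes the smallest power of $2$ not smaller than $x$. Classified Reallocation algorithm. Channels: one \emph{big channel} (all its clients transmit with period $\tau/2$) and \emph{$w$-channels} for powers of two $w$ (clients transmit with period $w$; at most $w$ clients; \emph{full} when holding $w$). State: $n$ (active clients, initially $0$), threshold $\tau$ (initially $2$). Arrival of $c_i$: $n\leftarrow n+1$. If $2\lceil\lceil n\rceil\rceil>\tau$: $\tau\leftarrow 2\lceil\lceil n\rceil\rceil$; each big-channel client $c_j$ with $w_j<\tau/2$ is reallocated to the non-full $w_j$-channel of minimum load (a new one reserved if needed); remaining big-channel clients get period $\tau/2$. Then if $w_i\ge\tau$, $c_i$ goes to the big channel; otherwise to the non-full $w_i$-channel of minimum load (new one reserved if needed). Departure of $c_i$ from channel $c$: $n\leftarrow n-1$. If $c$ is not the big channel: release $c$ if empty; otherwise if some $w_i$-channel $c'\ne c$ is not full, move one client from $c'$ to $c$. Then if $2\lceil\lceil n\rceil\rceil<\tau$: $\tau\leftarrow 2\lceil\lceil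 n\rceil\rceil$, big-channel clients get period $\tau/2$, and every $w$-channel with $w>2\tau$ has all its clients reallocated to the big channel and is released. *)

(* Defs.v *)
From mathcomp Require Import all_boot.
Set Implicit Arguments. Unset Strict Implicit. Unset Printing Implicit Defensive.

(* A client is a pair (identifier, laxity w). *)
Definition client := (nat * nat)%type.
(* A w-channel is a pair (w, list of its clients). *)
Definition channel := (nat * seq client)%type.

(* Algorithm state: n (active clients), threshold tau, clients of the big
   channel, the currently reserved w-channels, and a ghost field
   [bigt i] = value of n at the last allocation of client i to the big
   channel. *)
Record state := State {
  cnt : nat; tau : nat; big : seq client; chans : seq channel;
  bigt : nat -> nat }.

Definition init : state := State 0 2 [::] [::] (fun _ => 0).

(* ceil-pow2 n: smallest power of 2 not smaller than n (= 1 for n = 0). *)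
Definition cpow2 (n : nat) : nat := 2 ^ up_log 2 n.
Definition is_pow2 (w : nat) : Prop := exists k, w = 2 ^ k.

Definition ch0 : channel := (0, [::]).
Definition nonfull (ch : channel) : bool := size ch.2 < ch.1.

Definition active (s : state) (i : nat) : bool :=
  has (fun c : client => c.1 == i) (big s)
  || has (fun ch : channel => has (fun c : client => c.1 == i) ch.2) (chans s).

Inductive place : seq channel -> client -> seq channel -> Prop :=
| place_exist chs c k :
    k < size chs -> (nth ch0 chs k).1 = c.2 -> nonfull (nth ch0 chs k) ->
    (forall k', k' < size chs -> (nth ch0 chs k').1 = c.2 ->
        nonfull (nth ch0 chs k') ->
        size (nth ch0 chs k).2 <= size (nth ch0 chs k').2) ->
    place chs c (set_nth ch0 chs k (c.2, rcons (nth ch0 chs k).2 c))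
| place_new chs c :
    (forall ch, ch \in chs -> ch.1 = c.2 -> ~~ nonfull ch) ->
    place chs c (rcons chs (c.2, [:: c])).

Inductive place_all : seq channel -> seq client -> seq channel -> Prop :=
| place_all_nil chs : place_all chs [::] chs
| place_all_cons chs c L chs1 chs2 :
    place chs c chs1 -> place_all chs1 L chs2 -> place_all chs (c :: L) chs2.

Inductive event := Arrive of nat & nat (* id, laxity *) | Depart of nat.

Definition upd (f : nat -> nat) (i v : nat) : nat -> nat :=
  fun j => if j == i then v else f j.

(* threshold update on arrival, with n1 the new number of active clients *)
Definition tau_up (t n1 : nat) : nat :=
  if t < 2 * cpow2 n1 then 2 * cpow2 n1 else t.
Definition moved_out (t n1 : nat) (b : seq client) : seq client :=
  if t < 2 * cpow2 n1 then [seq c <- b | c.2 < (2 * cpow2 n1) %/ 2] else [::].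
Definition stay_big (t n1 : nat) (b : seq client) : seq client :=
  if t < 2 * cpow2 n1 then [seq c <- b | ~~ (c.2 < (2 * cpow2 n1) %/ 2)] else b.

Definition delete_nth (chs : seq channel) (k : nat) : seq channel :=
  take k chs ++ drop k.+1 chs.

(* First phase of a departure of client c: remove c from its channel,
   releasing / refilling the channel as prescribed. *)
Inductive remove_client (s : state) (c : client) : seq client -> seq channel -> Prop :=
| rm_big : c \in big s -> remove_client s c (rem c (big s)) (chans s)
| rm_release k :
    k < size (chans s) -> c \in (nth ch0 (chans s) k).2 ->
    rem c (nth ch0 (chans s) k).2 = [::] ->
    remove_client s c (big s) (delete_nth (chans s) k)
| rm_move k k' x :
    k < size (chans s) -> c \in (nth ch0 (chans s) k).2 ->
    rem c (nth ch0 (chans s) k).2 != [::] ->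
    k' < size (chans s) -> k' != k -> (nth ch0 (chans s) k').1 = c.2 ->
    nonfull (nth ch0 (chans s) k') -> x \in (nth ch0 (chans s) k').2 ->
    remove_client s c (big s)
      (set_nth ch0
        (set_nth ch0 (chans s) k
           ((nth ch0 (chans s) k).1, rcons (rem c (nth ch0 (chans s) k).2) x))
        k' ((nth ch0 (chans s) k').1, rem x (nth ch0 (chans s) k').2))
| rm_keep k :
    k < size (chans s) -> c \in (nth ch0 (chans s) k).2 ->
    rem c (nth ch0 (chans s) k).2 != [::] ->
    (forall k', k' < size (chans s) -> k' != k ->
        (nth ch0 (chans s) k').1 = c.2 -> ~~ nonfull (nth ch0 (chans s) k')) ->
    remove_client s c (big s)
      (set_nth ch0 (chans s) k
         ((nth ch0 (chans s) k).1, rem c (nth ch0 (chans s) k).2)).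

(* Second phase of a departure: threshold decrease, with n1 = new n. *)
Definition depart_finish (s : state) (b : seq client) (chs : seq channel) : state :=
  let n1 := (cnt s).-1 in
  if 2 * cpow2 n1 < tau s then
    let t1 := 2 * cpow2 n1 in
    let dumped := flatten [seq ch.2 | ch <- chs & 2 * t1 < ch.1] in
    State n1 t1 (b ++ dumped) [seq ch <- chs | ~~ (2 * t1 < ch.1)]
      (fun j => if j \in map fst dumped then n1 else bigt s j)
  else State n1 (tau s) b chs (bigt s).

(* [step s e L s']: processing event e in state s yields s'; L is the list of
   clients reallocated out of the big channel during this processing. *)
Inductive step : state -> event -> seq client -> state -> Prop :=
| step_arrive_big s i w L chs1 :
    is_pow2 w -> ~~ active s i ->
    perm_eq L (moved_out (tau s) (cnt s).+1 (big s)) ->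
    place_all (chans s) L chs1 ->
    tau_up (tau s) (cnt s).+1 <= w ->
    step s (Arrive i w) (moved_out (tau s) (cnt s).+1 (big s))
      (State (cnt s).+1 (tau_up (tau s) (cnt s).+1)
         (rcons (stay_big (tau s) (cnt s).+1 (big s)) (i, w)) chs1
         (upd (bigt s) i (cnt s).+1))
| step_arrive_chan s i w L chs1 chs2 :
    is_pow2 w -> ~~ active s i ->
    perm_eq L (moved_out (tau s) (cnt s).+1 (big s)) ->
    place_all (chans s) L chs1 ->
    w < tau_up (tau s) (cnt s).+1 ->
    place chs1 (i, w) chs2 ->
    step s (Arrive i w) (moved_out (tau s) (cnt s).+1 (big s))
      (State (cnt s).+1 (tau_up (tau s) (cnt s).+1)
         (stay_big (tau s) (cnt s).+1 (big s)) chs2 (bigt s))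
| step_depart s i c b chs :
    c.1 = i -> remove_client s c b chs ->
    step s (Depart i) [::] (depart_finish s b chs).

Inductive reachable : state -> Prop :=
| reach_init : reachable init
| reach_step s e L s' : reachable s -> step s e L s' -> reachable s'.

(* Main.v *)
Require Import Defs.
From mathcomp Require Import all_boot.
Set Implicit Arguments. Unset Strict Implicit.

Lemma mem_set_nth' (T : eqType) (x0 v x : T) (s : seq T) k :
  x \in set_nth x0 s k v -> k < size s -> x = v \/ x \in s.
Proof.
elim: s k => [|a s IH] [|k] //=; rewrite inE.
- case/orP=> [/eqP->|H] _; [by left | by right; rewrite inE H orbT].
- case/orP=> [/eqP->|H] Hk; first by right; rewrite inE eqxx.
  by case: (IH k H Hk) => [->|H']; [left|right; rewrite inE H' orbT].
Qed.

Lemma mem_rem' (T : eqType) (x y : T) (s : seq T) : x \in rem y s -> x \in s.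
Proof.
elim: s => [|a s IH] //=; case: ifP => _; rewrite ?inE.
- by move=> H; rewrite H orbT.
- by case/orP=> [->|/IH ->]; rewrite ?orbT.
Qed.

Lemma mem_rcons' (T : eqType) (x y : T) (s : seq T) : x \in rcons s y -> x = y \/ x \in s.
Proof. by rewrite mem_rcons inE => /orP[/eqP->|H]; [left|right]. Qed.

Definition chinv (chs : seq channel) :=
  forall ch, ch \in chs -> forall x, x \in ch.2 -> x.2 = ch.1.

Lemma place_inv chs c chs' : chinv chs -> place chs c chs' -> chinv chs'.
Proof.
move=> H0 P; case: P H0 => {chs c chs'}.
- move=> chs c k Hk H1 _ _ H ch /mem_set_nth'/(_ Hk) [->|Hch] x /=.
  + case/mem_rcons' => [->//|Hx]. rewrite -H1; apply: H Hx; exact: mem_nth.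
  + exact: H.
- move=> chs c _ H ch /mem_rcons' [->|Hch] x /=.
  + by rewrite inE => /eqP->.
  + exact: H.
Qed.

Lemma place_all_inv chs L chs' : chinv chs -> place_all chs L chs' -> chinv chs'.
Proof.
move=> H P; elim: P H => // ? ? ? ? ? P _ IH H; apply: IH; exact: place_inv P.
Qed.

Definition inv (s : state) :=
  [/\ exists k, tau s = 2 ^ k.+1,
      (forall b, b \in big s -> tau s <= 2 * b.2 /\ 2 * cpow2 (bigt s b.1) <= b.2)
    & chinv (chans s)].

Lemma cpow2E n : cpow2 n = 2 ^ up_log 2 n.
Proof. by []. Qed.

Lemma tau_up_ge t N : 2 * cpow2 N <= tau_up t N.
Proof. by rewrite /tau_up; case: ifP => // /negbT; rewrite -leqNgt. Qed.

Lemma tau_up_pow t N : (exists k, t = 2 ^ k.+1) -> exists k, tau_up t N = 2 ^ k.+1.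
Proof.
rewrite /tau_up; case: ifP => // _ _; exists (up_log 2 N); by rewrite expnS.
Qed.

Lemma remove_inv s c b chs : inv s -> remove_client s c b chs ->
  (forall y, y \in b -> y \in big s) /\ chinv chs.
Proof.
case=> _ _ H []; clear b chs.
- by move=> _; split=> // y; apply: mem_rem'.
- move=> k Hk _ _; split=> // ch; rewrite /delete_nth mem_cat.
  case/orP=> [/mem_take|/mem_drop]; exact: H.
- move=> k k' x Hk Hc _ Hk' _ Hk'1 _ Hx; split=> // ch.
  case/mem_set_nth'; first by rewrite size_set_nth; apply: leq_trans (leq_maxr _ _).
  + move=> -> y /= /mem_rem' Hy; apply: H Hy; exact: mem_nth.
  + case/mem_set_nth'=> // [->|]; last exact: H.
    move=> y /= /mem_rcons' [->|/mem_rem' Hy].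
    * rewrite (H _ (mem_nth ch0 Hk') _ Hx) Hk'1; exact: (H _ (mem_nth ch0 Hk) _ Hc).
    * apply: H Hy; exact: mem_nth.
- move=> k Hk _ _ _; split=> // ch.
  case/mem_set_nth' => // [->|]; last exact: H.
  move=> y /= /mem_rem' Hy; apply: H Hy; exact: mem_nth.
Qed.

Lemma step_inv s e L s' : inv s -> step s e L s' -> inv s'.
Proof.
move=> I st; case: st I => {s e L s'}.
- move=> s i w L chs1 _ Hna _ Hpa Hw [Ht Hb Hc]; split=> /=.
  + exact: tau_up_pow.
  + move=> y /mem_rcons' [->|].
    * rewrite /upd eqxx; split; first by apply: leq_trans Hw _; exact: leq_pmull.
      exact: leq_trans (tau_up_ge _ _) Hw.
    * have Hy : forall y, y \in stay_big (tau s) (cnt s).+1 (big s) -> y \in big s /\ tau_up (tau s) (cnt s).+1 <= 2 * y.2.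
        move=> z; rewrite /stay_big /tau_up; case: ifP => _; last by move=> Hz; split=> //; case: (Hb _ Hz).
        rewrite mem_filter -leqNgt => /andP[Hz1 Hz]; split=> //.
        move: Hz1; rewrite mulKn //; by rewrite leq_pmul2l.
      move=> /Hy [Hyb Hyt]; split=> //.
      have Hne : y.1 != i.
        move: Hna; rewrite /active negb_or => /andP[/hasPn Hn _]; exact: Hn.
      by rewrite /upd (negbTE Hne); case: (Hb _ Hyb).
  + exact: place_all_inv Hpa.
- move=> s i w L chs1 chs2 _ _ _ Hpa _ Hpl [Ht Hb Hc]; split=> /=.
  + exact: tau_up_pow.
  + move=> z; rewrite /stay_big /tau_up; case: ifP => _; last by apply: Hb.
    rewrite mem_filter -leqNgt => /andP[Hz1 Hz]; split; last by case: (Hb _ Hz).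
    move: Hz1; rewrite mulKn //; by rewrite leq_pmul2l.
  + apply: place_inv Hpl; exact: place_all_inv Hpa.
- move=> s i c b chs _ Hr I; have [Hsub Hc'] := remove_inv I Hr.
  case: I => [[k Hk] Hb Hc].
  rewrite /depart_finish; case: ifP => Hlt; split=> //=.
  + by exists (up_log 2 (cnt s).-1); rewrite expnS.
  + set t1 := 2 * cpow2 (cnt s).-1 in Hlt *.
    have H2 : 2 * t1 <= tau s.
      move: Hlt; rewrite /t1 cpow2E -expnS Hk ltn_exp2l // => H.
      by rewrite -expnS leq_exp2l.
    move=> y; rewrite mem_cat => /orP[Hy|Hy].
    * have [Hy1 Hy2] := Hb _ (Hsub _ Hy).
      split; first by apply: leq_trans Hy1; apply: leq_trans H2; exact: leq_pmull.
      case: ifP => // _; rewrite -/t1 -(leq_pmul2l (isT : 0 < 2)).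
      exact: leq_trans H2 Hy1.
    * have Hm : y.1 \in map fst (flatten [seq ch.2 | ch <- chs & 2 * t1 < ch.1]) by apply: map_f.
      rewrite Hm -/t1.
      move/flatten_mapP: Hy => [ch]; rewrite mem_filter => /andP[Hch1 Hch] Hy.
      rewrite (Hc' _ Hch _ Hy).
      have Ht : t1 <= ch.1 by apply: leq_trans _ (ltnW Hch1); exact: leq_pmull.
      split=> //; apply: leq_trans Ht _; exact: leq_pmull.
  + move=> ch; rewrite mem_filter => /andP[_]; exact: Hc'.
  + by exists k.
  + move=> y Hy; exact: Hb (Hsub _ Hy).
Qed.

Lemma reach_inv s : reachable s -> inv s.
Proof.
elim=> [|? ? ? ? _ IH st]; last exact: step_inv IH st.
by split=> //; exists 0.
Qed.

Theorem lemma1 (s : state) (e : event) (L : seq client) (s' : state) (c : client) :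
  reachable s -> step s e L s' -> c \in L -> 2 * bigt s c.1 <= cnt s'.
Proof.
move=> /reach_inv [_ Hb _] st; case: st Hb => {s e L s'};
  [ move=> s i w L chs1 _ _ _ _ _ Hb | move=> s i w L chs1 chs2 _ _ _ _ _ _ Hb
  | by move=> ? ? ? ? ? _ _ _; rewrite in_nil ];
  rewrite /moved_out; (case: ifP => _; last by rewrite in_nil);
  rewrite mem_filter mulKn // => /andP[Hlt Hc] /=;
  (have [_ Hc2] := Hb _ Hc);
  have H1 := leq_ltn_trans Hc2 Hlt;
  rewrite !cpow2E -expnS ltn_exp2l // in H1;
  (have HN : 1 < (cnt s).+1 by
     rewrite ltnS lt0n; apply/negP => /eqP E; move: H1; rewrite E up_log1);
  have H3 := up_log_gtn (isT : 1 < 2) HN;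
  (have H4 : 2 ^ (up_log 2 (bigt s c.1)).+1 <= 2 ^ (up_log 2 (cnt s).+1).-1 by
     rewrite leq_exp2l // -ltnS prednK //; apply: leq_ltn_trans H1);
  apply: ltnW; apply: leq_ltn_trans H3; apply: leq_trans H4;
  rewrite expnS leq_pmul2l //; exact: up_logP.
Qed.
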